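(* For complex numbers $x_1,\dots,x_M$ and $y_1,\dots,y_N$ with $N>M$ (pairwise distinct within each family and $x_a\ne y_b$), one has $\mathcal A^\pm_{\{y\}}\!\left[E^\mp_{\{x\}}\right]=0$.
   Context: Let $\eta\in\mathbb C\setminus\{0\}$. For a family $\{x\}=\{x_1,\dots,x_M\}$ and $y\in\mathbb C$, $E^\pm_{\{x\}}(y)=\prod_{n=1}^M\frac{y-x_n\pm\eta}{y-x_n}$. With $V(y_1,\dots,y_N)=\prod_{1\le b<a\le N}(y_a-y_b)$, for pairwise distinct $y_a$ and a function $f$ defined there, $\mathcal A^\pm_{\{y\}}[f]=\det_{1\le a,b\le N}[y_a^{b-1}-f(y_a)(y_a\pm\eta)^{b-1}]/V(y_1,\dots,y_N)$. *)

(* Defs.v *)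
From HB Require Import structures.
From mathcomp Require Import all_boot all_order all_algebra.
From mathcomp Require Import reals.
From mathcomp Require Export complex.
Set Implicit Arguments. Unset Strict Implicit. Unset Printing Implicit Defensive.
Import Order.TTheory GRing.Theory Num.Theory.
Local Open Scope ring_scope.
Local Open Scope complex_scope.

Definition pmsign {F : ringType} (s : bool) (eta : F) : F := if s then eta else - eta.

Definition Efun {F : fieldType} (s : bool) (eta : F) (M : nat) (x : 'I_M -> F) (y : F) : F :=
  \prod_(n < M) ((y - x n + pmsign s eta) / (y - x n)).

Definition Vand {F : fieldType} (N : nat) (y : 'I_N -> F) : F :=
  \prod_(a < N) \prod_(b < N | (b < a)%N) (y a - y b).

(* A^{pm}_{y}[f] = det[y_a^(b-1) - f(y_a) (y_a pm eta)^(b-1)] / V(y),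
   with 0-based column index b (so exponent b corresponds to b-1 in 1-based). *)
Definition Aop {F : fieldType} (s : bool) (eta : F) (N : nat) (y : 'I_N -> F)
  (f : F -> F) : F :=
  \det (\matrix_(a < N, b < N) (y a ^+ b - f (y a) * (y a + pmsign s eta) ^+ b))
  / Vand y.

(* Main.v *)
Require Import Defs.
From HB Require Import structures.
From mathcomp Require Import all_boot all_order all_algebra.
From mathcomp Require Import reals complex.
Import Order.TTheory GRing.Theory Num.Theory.
Local Open Scope ring_scope.
Local Open Scope complex_scope.

Lemma gen_zero (F : fieldType) (s : bool) (eta : F) (M N : nat)
    (x : 'I_M -> F) (y : 'I_N -> F) :
  (M < N)%N ->
  (forall (m : 'I_M) (a : 'I_N), x m != y a) ->
  Aop s eta y (Efun (~~ s) eta x) = 0.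
Proof.
move=> MN xy.
rewrite /Aop; apply/eqP; rewrite mulf_eq0; apply/orP; left.
rewrite -det_tr; apply/det0P.
set e := pmsign s eta.
pose C : {poly F} := \prod_(n < M) ('X - (x n + e)%:P).
have sC : size C = M.+1.
  by rewrite size_prod_XsubC /index_enum unlock /= -enumT size_enum_ord.

exists (\row_(b < N) C`_b).
  apply/eqP => /matrixP /(_ 0 (Ordinal MN)); rewrite !mxE => H.
  have : lead_coef C = 1 by apply/eqP; apply: monic_prod_XsubC.
  move=> L; move: H L; rewrite lead_coefE sC /=.
  by move=> -> /eqP; rewrite eq_sym oner_eq0.

apply/rowP => a; rewrite !mxE.
under eq_bigr => b _ do rewrite !mxE mulrBr mulrCA.
rewrite sumrB -mulr_sumr -!horner_coef_wide ?sC //.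
rewrite !horner_prod /Efun -big_split /=.
apply/eqP; rewrite subr_eq0; apply/eqP.
apply: eq_bigr => n _; rewrite !hornerE.
have ne : y a - x n != 0 by rewrite subr_eq0 eq_sym.
have -> : y a + e - (x n + e) = y a - x n by rewrite opprD addrACA subrr addr0.
rewrite divfK //.
rewrite /e /pmsign; clear e C sC; case: s => /=; by rewrite opprD addrA ?opprK.
Qed.

Theorem corollary2 (R : realType) (eta : R[i]) (M N : nat)
    (x : 'I_M -> R[i]) (y : 'I_N -> R[i]) :
  eta != 0 ->
  (M < N)%N ->
  injective x -> injective y ->
  (forall (m : 'I_M) (a : 'I_N), x m != y a) ->
  Aop true eta y (Efun false eta x) = 0 /\
  Aop false eta y (Efun true eta x) = 0.
Proof.
move=> _ MN _ _ xy; split.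
- by have := @gen_zero _ true eta M N x y MN xy.
- by have := @gen_zero _ false eta M N x y MN xy.
Qed.
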